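(* Let $e=e_{\gamma,a}$ be the directed edge of $\Gamma$ with initial vertex (the element represented by) $\gamma$ and label $a\in\{x^{\pm1},y^{\pm1}\}$, where $\gamma\equiv x^{i_n}y^{\epsilon_n}\cdots x^{i_1}y^{\epsilon_1}x^{i_0}\in\mathcal N$ (with $n\ge0$, $\epsilon_j\in\{\pm1\}$, $i_j\in\mathbb Z$). Then $e$ does not lie on the tree $T$ if and only if one of the following holds: (1) $a\equiv y$, $n\ge1$ and $i_0\ge1$; (2) $a\equiv y^{-1}$, $n\ge1$ and $i_0\ge2$. In particular, all edges of $\Gamma$ labeled $x^{\pm1}$ lie on $T$.
   Context: $F$ is Thompson's group with generators $x,y$, $A=\{x^{\pm1},y^{\pm1}\}$, and $\Gamma$ is the Cayley graph of $F$ with respect to $A$. $\mathcal N$ is the set of words over $A$ containing no subword $aa^{-1}$ ($a\in A$), $y^\epsilon x^iy$, or $y^\epsilon x^{i+1}y^{-1}$ ($\epsilon=\pm1$, $i\ge1$); it is a set of unique normal forms for $F$ (the irreducible words of Guba–Sapir's convergent rewriting system). $T$ is the subtree of $\Gamma$ such that the labels of non-backtracking paths in $T$ starting at the identity vertex are exactly the words in $\mathcal N$. *)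

(* Defs.v *)
From HB Require Import structures.
From mathcomp Require Import all_boot all_order all_algebra.
Set Implicit Arguments. Unset Strict Implicit. Unset Printing Implicit Defensive.
Import Order.TTheory GRing.Theory Num.Theory.

(* Letters of A = {x, x^-1, y, y^-1}. *)
Inductive letter := xl | xi | yl | yi.

Definition letter_eqb (a b : letter) : bool :=
  match a, b with
  | xl, xl | xi, xi | yl, yl | yi, yi => true
  | _, _ => false
  end.
Lemma letter_eqP : Equality.axiom letter_eqb.
Proof. by case; case; constructor. Qed.
HB.instance Definition _ := hasDecEq.Build letter letter_eqP.

Definition linv (a : letter) : letter :=
  match a with xl => xi | xi => xl | yl => yi | yi => yl end.

Definition word := seq letter.
Definition winv (w : word) : word := rev (map linv w).

Definition wcomm (a b : word) : word := winv a ++ winv b ++ a ++ b.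

(* Relators of the standard presentation
   F = < x, y | [x y^-1, x^-1 y x], [x y^-1, x^-2 y x^2] >. *)
Definition relator1 : word := wcomm [:: xl; yi] [:: xi; yl; xl].
Definition relator2 : word := wcomm [:: xl; yi] [:: xi; xi; yl; xl; xl].

Inductive weq : word -> word -> Prop :=
| weq_refl w : weq w w
| weq_sym u v : weq u v -> weq v u
| weq_trans u v w : weq u v -> weq v w -> weq u w
| weq_free u a v : weq (u ++ a :: linv a :: v) (u ++ v)
| weq_rel1 u v : weq (u ++ relator1 ++ v) (u ++ v)
| weq_rel2 u v : weq (u ++ relator2 ++ v) (u ++ v).

(* The set N of Guba--Sapir normal forms. *)
Definition ylet (e : bool) : letter := if e then yl else yi.

Definition inN (w : word) : Prop :=
  (forall u a v, w <> u ++ a :: linv a :: v) /\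
  (forall u e i v, (1 <= i)%N ->
     w <> u ++ ylet e :: nseq i xl ++ yl :: v) /\
  (forall u e i v, (1 <= i)%N ->
     w <> u ++ ylet e :: nseq i.+1 xl ++ yi :: v).

Definition xpow (i : int) : word :=
  if (0 <= i)%R then nseq `|i|%N xl else nseq `|i|%N xi.

Fixpoint nfword (n : nat) (ex : nat -> int) (eps : nat -> bool) : word :=
  match n with
  | 0 => xpow (ex 0%N)
  | k.+1 => xpow (ex k.+1) ++ ylet (eps k.+1) :: nfword k ex eps
  end.

(* The (undirected) edge e_{g,a} of the Cayley graph, from (the element
   represented by) g to g a, lies on the tree T: it ex traversed by the
   path from the identity labelled by some word of N. *)
Definition onT (g : word) (a : letter) : Prop :=
  exists w u b v, inN w /\ w = u ++ b :: v /\
    ((weq u g /\ b = a) \/ (weq u (rcons g a) /\ b = linv a)).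

(* Main.v *)
Require Import Defs.
From HB Require Import structures.
From mathcomp Require Import all_boot all_order all_algebra.
From mathcomp Require Import zify.
From Stdlib Require Import Setoid Morphisms Classical.
Import Order.TTheory GRing.Theory Num.Theory.
Set Implicit Arguments. Unset Strict Implicit. Unset Printing Implicit Defensive.

Add Parametric Relation : (seq letter) weq
  reflexivity proved by weq_refl
  symmetry proved by weq_sym
  transitivity proved by weq_trans as weq_rel.

#[export] Hint Resolve weq_refl : core.

Lemma weq_catr u v w : weq u v -> weq (u ++ w) (v ++ w).
Proof.
elim=> {u v}.
- by move=> *; apply: weq_refl.
- by move=> *; apply: weq_sym.
- by move=> u v w' _ H1 _ H2; apply: weq_trans H1 H2.
- by move=> u a v; rewrite -!catA /=; apply: weq_free.
- by move=> u v; rewrite -!catA; apply: weq_rel1.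
- by move=> u v; rewrite -!catA; apply: weq_rel2.
Qed.

Lemma weq_catl u v w : weq u v -> weq (w ++ u) (w ++ v).
Proof.
elim=> {u v}.
- by move=> *; apply: weq_refl.
- by move=> *; apply: weq_sym.
- by move=> u v w' _ H1 _ H2; apply: weq_trans H1 H2.
- by move=> u a v; rewrite !catA; apply: weq_free.
- by move=> u v; rewrite !(catA w u); apply: weq_rel1.
- by move=> u v; rewrite !(catA w u); apply: weq_rel2.
Qed.

#[export] Instance cat_weq_proper : Proper (weq ==> weq ==> weq) (@cat letter).
Proof.
intros u u' Hu v v' Hv. exact: (weq_trans (weq_catr v Hu) (weq_catl u' Hv)).
Qed.

#[export] Instance cons_weq_proper a : Proper (weq ==> weq) (cons a).
Proof. intros u v H. exact: (weq_catl [:: a] H). Qed.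

#[export] Instance rcons_weq_proper : Proper (weq ==> eq ==> weq) (@rcons letter).
Proof. intros u v H a b E. rewrite E -!cats1. exact: weq_catr. Qed.

Lemma linvK : involutive linv. Proof. by case. Qed.

Lemma winv_cat u v : winv (u ++ v) = winv v ++ winv u.
Proof. by rewrite /winv map_cat rev_cat. Qed.

Lemma winvK : involutive winv.
Proof. by move=> w; rewrite /winv map_rev revK; apply: (mapK linvK). Qed.

Lemma winv_cons a w : winv (a :: w) = rcons (winv w) (linv a).
Proof. by rewrite /winv /= rev_cons. Qed.

Lemma weq_free0 a : weq [:: a; linv a] [::].
Proof. by have := weq_free [::] a [::]. Qed.

Lemma weq_invr w : weq (w ++ winv w) [::].
Proof.
elim: w => [|a w IH] /=; first exact: weq_refl.
rewrite winv_cons -cats1.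
rewrite catA IH /=. exact: weq_free0.
Qed.

Lemma weq_invl w : weq (winv w ++ w) [::].
Proof. by have := weq_invr (winv w); rewrite winvK. Qed.

Lemma weq_winv u v : weq u v -> weq (winv u) (winv v).
Proof.
move=> H.
transitivity (winv u ++ v ++ winv v); first by rewrite weq_invr cats0.
apply: weq_trans (weq_catl _ (weq_catr _ (weq_sym H))) _.
by rewrite catA weq_invl.
Qed.

Lemma weq_cancel_l p u v : weq (p ++ u) (p ++ v) -> weq u v.
Proof.
move=> H. transitivity (winv p ++ p ++ u); first by rewrite catA weq_invl.
by rewrite H catA weq_invl.
Qed.

Lemma weq_cancel_r p u v : weq (u ++ p) (v ++ p) -> weq u v.
Proof.
move=> H. transitivity (u ++ p ++ winv p); first by rewrite weq_invr cats0.
by rewrite catA H -catA weq_invr cats0.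
Qed.

Local Open Scope ring_scope.

Lemma nseqS_rcons n (x : letter) : nseq n.+1 x = rcons (nseq n x) x.
Proof. by elim: n => //= n <-. Qed.

Lemma xpow_pos (n : nat) : xpow n = nseq n xl.
Proof. by []. Qed.

Lemma xpow_neg (n : nat) : xpow (- n%:Z) = nseq n xi.
Proof. by case: n. Qed.

Lemma xpow_negS (n : nat) : xpow (Negz n) = nseq n.+1 xi.
Proof. by []. Qed.

Lemma weq_free_end u a : weq (u ++ [:: a; linv a]) u.
Proof. by have := weq_free u a [::]; rewrite cats0. Qed.

Lemma xpow_S a : weq (xpow (a + 1)) (rcons (xpow a) xl).
Proof.
case: a => n.
  have -> : n%:Z + 1 = n.+1%:Z by lia.
  by rewrite xpow_pos nseqS_rcons.
have -> : Negz n + 1 = - n%:Z by lia.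
rewrite xpow_neg xpow_negS nseqS_rcons -cats1 -cats1 -catA /=.
by rewrite (weq_free_end _ xi).
Qed.

Lemma xpow_P a : weq (xpow (a - 1)) (rcons (xpow a) xi).
Proof.
case: a => [[|n]|n].
- by [].
- have -> : n.+1%:Z - 1 = n%:Z by lia.
  rewrite !xpow_pos nseqS_rcons -cats1 -cats1 -catA /=.
  by rewrite (weq_free_end _ xl).
- have -> : Negz n - 1 = Negz n.+1 by lia.
  by rewrite !xpow_negS nseqS_rcons.
Qed.

Lemma xpow_addn a (n : nat) : weq (xpow a ++ xpow n) (xpow (a + n%:Z)).
Proof.
elim: n => [|n IH]; first by rewrite addr0 cats0.
rewrite xpow_pos nseqS_rcons -xpow_pos -rcons_cat IH.
have -> : a + n.+1%:Z = a + n%:Z + 1 by lia.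
by rewrite xpow_S.
Qed.

Lemma xpow_subn a (n : nat) : weq (xpow a ++ xpow (- n%:Z)) (xpow (a - n%:Z)).
Proof.
elim: n => [|n IH]; first by rewrite subr0 cats0.
rewrite xpow_neg nseqS_rcons -xpow_neg -rcons_cat IH.
have -> : a - n.+1%:Z = a - n%:Z - 1 by lia.
by rewrite xpow_P.
Qed.

Lemma xpow_add a b : weq (xpow a ++ xpow b) (xpow (a + b)).
Proof.
case: b => n; first exact: xpow_addn.
have E : Negz n = - n.+1%:Z by lia.
by rewrite E xpow_subn.
Qed.

Lemma xpow0 : xpow 0 = [::]. Proof. by []. Qed.

Lemma xpow_eq a b : a = b -> xpow a = xpow b. Proof. by move->. Qed.

Lemma winv_nseq n l : winv (nseq n l) = nseq n (linv l).
Proof. by rewrite /winv map_nseq rev_nseq. Qed.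

Lemma winv_xpow a : winv (xpow a) = xpow (- a).
Proof.
case: a => [[|n]|n].
- by [].
- by rewrite xpow_pos winv_nseq -xpow_neg.
- have -> : - Negz n = n.+1%:Z by lia.
  by rewrite xpow_negS winv_nseq xpow_pos.
Qed.

Definition Zs (e : bool) (k : int) : word := xpow (1 - k) ++ ylet e :: xpow (k - 1).
Definition A0 : word := [:: xl; yi].
Definition conj (d : int) (w : word) : word := xpow (- d) ++ w ++ xpow d.
Definition comm (u v : word) := weq (u ++ v) (v ++ u).

Lemma winv_Zs e k : winv (Zs e k) = Zs (~~ e) k.
Proof.
rewrite /Zs winv_cat winv_cons winv_xpow -cats1 -catA winv_xpow.
have -> : - (k - 1) = 1 - k by lia.
have -> : - (1 - k) = k - 1 by lia.
by case: e.
Qed.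

Lemma conj_cat d u v : weq (conj d (u ++ v)) (conj d u ++ conj d v).
Proof.
rewrite /conj -!catA.
rewrite (catA (xpow d) (xpow (- d))) xpow_add.
have -> : d + - d = 0 by lia.
by rewrite xpow0.
Qed.

Lemma conj_Zs d e k : weq (conj d (Zs e k)) (Zs e (k + d)).
Proof.
rewrite /conj /Zs -catA catA xpow_add /= xpow_add.
have -> : - d + (1 - k) = 1 - (k + d) by lia.
by have -> : k - 1 + d = k + d - 1 by lia.
Qed.

Lemma conj_winv d w : conj d (winv w) = winv (conj d w).
Proof. by rewrite /conj !winv_cat !winv_xpow opprK catA. Qed.

Lemma Zs1 e : Zs e 1 = [:: ylet e]. Proof. by []. Qed.
Lemma Z2 : Zs true 2 = [:: xi; yl; xl]. Proof. by []. Qed.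
Lemma Z3 : Zs true 3 = [:: xi; xi; yl; xl; xl]. Proof. by []. Qed.

Lemma comm_of_rel a b : weq (winv a ++ winv b ++ a ++ b) [::] -> comm a b.
Proof.
move=> H; rewrite /comm.
transitivity (b ++ a ++ (winv a ++ winv b ++ a ++ b)); last by rewrite H cats0.
by rewrite (catA a (winv a)) weq_invr /= (catA b (winv b)) weq_invr.
Qed.

Lemma comm_weq a u v : weq u v -> comm a u -> comm a v.
Proof. by move=> H; rewrite /comm H. Qed.

Lemma comm_cat a u v : comm a u -> comm a v -> comm a (u ++ v).
Proof. by rewrite /comm => Hu Hv; rewrite catA Hu -catA Hv catA. Qed.

Lemma comm_winv a u : comm a u -> comm a (winv u).
Proof.
rewrite /comm => H.
apply: (@weq_cancel_l u); apply: (@weq_cancel_r u).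
rewrite !catA weq_invr /= -catA weq_invl cats0.
exact: weq_sym.
Qed.

Lemma rel1_weq : weq relator1 [::].
Proof. by have := weq_rel1 [::] [::]; rewrite cats0. Qed.
Lemma rel2_weq : weq relator2 [::].
Proof. by have := weq_rel2 [::] [::]; rewrite cats0. Qed.

Lemma C2 : comm A0 (Zs true 2).
Proof. by rewrite Z2; apply: comm_of_rel; exact: rel1_weq. Qed.
Lemma C3 : comm A0 (Zs true 3).
Proof. by rewrite Z3; apply: comm_of_rel; exact: rel2_weq. Qed.

Lemma comm_conj w : comm A0 w -> weq ([:: yi] ++ w ++ [:: yl]) (conj 1 w).
Proof.
move=> H.
have E1 : weq ([:: yi] ++ w ++ [:: yl]) ([:: xi] ++ (A0 ++ w) ++ [:: yl]).
  rewrite -catA /=; apply: weq_sym; exact: (weq_free [::] xi _).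
have E2 : weq ([:: xi] ++ (w ++ A0) ++ [:: yl]) (conj 1 w).
  rewrite /conj -catA /A0 /=.
  have := weq_free (xi :: w ++ [:: xl]) yi [::].
  by rewrite cats0 /= -!catA /= (xpow_pos 1).
rewrite E1. rewrite (weq_catl _ (weq_catr _ H)). exact E2.
Qed.

Lemma T12 : weq ([:: yi] ++ Zs true 2 ++ [:: yl]) (Zs true 3).
Proof. by rewrite (comm_conj C2) conj_Zs. Qed.

Lemma Tj j : weq (Zs false j ++ Zs true (j + 1) ++ Zs true j) (Zs true (j + 2)).
Proof.
set d := j - 1.
have E := conj_cat d (Zs false 1) (Zs true 2 ++ Zs true 1).
have E' := conj_cat d (Zs true 2) (Zs true 1).
have : weq (conj d (Zs false 1 ++ Zs true 2 ++ Zs true 1)) (conj d (Zs true 3)).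
  by rewrite /conj T12.
rewrite E E' !conj_Zs.
have -> : 1 + d = j by rewrite /d; lia.
have -> : 2 + d = j + 1 by rewrite /d; lia.
by have -> : 3 + d = j + 2 by rewrite /d; lia.
Qed.

Lemma Cn (n : nat) : (2 <= n)%N -> comm A0 (Zs true n%:Z).
Proof.
elim/ltn_ind: n => n IH Hn.
case: n IH Hn => [|[|[|[|n]]]] IH Hn //; first exact: C2; first exact: C3.
have E := Tj (n.+2%:Z).
have -> : n.+4%:Z = n.+2%:Z + 2 by lia.
apply: (@comm_weq _ _ _ E).
apply: comm_cat; first by rewrite -(winv_Zs true); apply: comm_winv; apply: IH.
apply: comm_cat; last by apply: IH.
have -> : n.+2%:Z + 1 = n.+3%:Z by lia.
by apply: IH.
Qed.

Lemma T1s e (n : int) : 2 <= n ->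
  weq ([:: yi] ++ Zs e n ++ [:: yl]) (Zs e (n + 1)).
Proof.
move=> Hn.
have Ht : weq ([:: yi] ++ Zs true n ++ [:: yl]) (Zs true (n + 1)).
  case: n Hn => [m|m] Hm; last by [].
  rewrite (comm_conj (Cn _)) ?conj_Zs //; lia.
case: e => //.
have := weq_winv Ht.
by rewrite (winv_cat [:: yi]) (winv_cat (Zs true n)) !winv_Zs /= => H; exact H.
Qed.

Definition sgnb (d : bool) : int := if d then 1 else -1.

Lemma relX e d (m : int) : (if d then 1 <= m else 2 <= m) ->
  weq (ylet e :: xpow m ++ [:: ylet d])
      (xpow m ++ ylet d :: xpow (- m - sgnb d) ++ ylet e :: xpow (m + sgnb d)).
Proof.
move=> Hm.
apply: (@weq_cancel_l (xpow (- m))).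
have EL : xpow (- m) ++ ylet e :: xpow m ++ [:: ylet d] = Zs e (m + 1) ++ [:: ylet d].
  rewrite /Zs -catA /=.
  have -> : 1 - (m + 1) = - m by lia.
  by have -> : m + 1 - 1 = m by lia.
have ER : weq (xpow (- m) ++ xpow m ++ ylet d :: xpow (- m - sgnb d) ++ ylet e :: xpow (m + sgnb d))
           ([:: ylet d] ++ Zs e (m + 1 + sgnb d)).
  rewrite catA xpow_add.
  have -> : - m + m = 0 by lia.
  rewrite xpow0 /Zs /=.
  have -> : 1 - (m + 1 + sgnb d) = - m - sgnb d by lia.
  by have -> : m + 1 + sgnb d - 1 = m + sgnb d by lia.
rewrite EL ER; clear EL ER.
case: d Hm => Hm /=.
- apply: (@weq_cancel_l [:: yi]).
  rewrite (T1s e (_ : 2 <= m + 1)); last by lia.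
  apply: weq_sym; exact: (weq_free [::] yi _).
- apply: (@weq_cancel_r [:: yl]).
  have -> : m + 1 - 1 = m by lia.
  rewrite -catA /= (weq_free_end _ yi).
  by rewrite -(T1s e Hm).
Qed.

Definition zl := (int * bool)%type.
Definition cancelb (p q : zl) : bool := (p.1 == q.1) && (p.2 != q.2).
Definition crossb (p q : zl) : bool := if q.2 then q.1 < p.1 else q.1 + 1 < p.1.
Definition allowed (p q : zl) := ~~ cancelb p q && ~~ crossb p q.

Fixpoint ins (Z : seq zl) (q : zl) : seq zl :=
  match Z with
  | [::] => [:: q]
  | p :: Z' => if cancelb p q then Z'
               else if crossb p q then (p.1 + sgnb q.2, p.2) :: ins Z' q
               else q :: Z
  end.

Fixpoint reduced (Z : seq zl) : bool :=
  match Z with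
  | [::] => true
  | q :: Z' => reduced Z' && (if Z' is p :: _ then allowed p q else true)
  end.

Lemma reduced_cons2 p c Z : reduced (p :: c :: Z) = reduced (c :: Z) && allowed c p.
Proof. by []. Qed.

Ltac zs := rewrite /allowed /cancelb /crossb /sgnb /=.

Lemma ins_red_aux Z p q : reduced (p :: Z) -> crossb p q ->
  reduced ((p.1 + sgnb q.2, p.2) :: ins Z q).
Proof.
case: q => b d.
elim: Z p => [|c Z IH] [a e] /=.
  by case: e; case: d; zs; lia.
case/andP=> Hr Hca Hx.
case: ifP => Hc.
  clear IH; move: Hr; case: Z => [|h Z] //= /andP [-> Hh] /=.
  clear -Hh Hca Hc Hx; move: Hh Hca Hc Hx; case: c h => [c g] [k f].
  by case: d; case: e; case: g; case: f; zs; lia.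
case: ifP => Hx2.
  rewrite (IH c Hr Hx2) andTb.
  clear -Hca Hx; move: Hca Hx; case: c => c g.
  by case: d; case: e; case: g; zs; lia.
rewrite reduced_cons2 (Hr : reduced (c :: Z)) /allowed Hc Hx2 /=.
clear -Hx; move: Hx.
by case: d; case: e; zs; lia.
Qed.

Lemma ins_reduced Z q : reduced Z -> reduced (ins Z q).
Proof.
case: Z => [|p Z] //= Hr.
case: ifP => Hc.
  by case: Z Hr => //= c Z /andP [].
case: ifP => Hx; first exact: ins_red_aux.
by apply/andP; split => //; rewrite /allowed Hc Hx.
Qed.


Lemma sgnbK a d : a + sgnb d + sgnb (~~ d) = a.
Proof. by case: d; rewrite /sgnb /=; lia. Qed.

Lemma cross_back a e b d : crossb (a, e) (b, d) ->
  cancelb (a + sgnb d, e) (b, ~~ d) = false /\ crossb (a + sgnb d, e) (b, ~~ d) = true.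
Proof. by case: d; case: e; zs; lia. Qed.

Lemma ins_inv Z q : reduced Z -> ins (ins Z q) (q.1, ~~ q.2) = Z.
Proof.
case: q => b d.
elim: Z => [|[a e] Z IH] /=.
  by rewrite /cancelb /= eqxx; case: d.
case/andP => Hr Hal.
case: ifP => Hc.
  have [Ea Ee] : a = b /\ e = ~~ d.
    move: Hc; rewrite /cancelb /= => /andP [/eqP -> H]; split => //.
    by move: H; case: (d); case: (e).
  subst a e.
  case: Z Hr Hal {IH} => [|c Z] //= _.
  by rewrite /allowed => /andP [/negbTE -> /negbTE ->].
case: ifP => Hx /=.
  have [-> ->] := cross_back Hx.
  rewrite IH //.
  by rewrite sgnbK.
by rewrite /cancelb /= eqxx; case: (d).
Qed.

Ltac zif :=
  match goal with
  | |- context [if ?b then _ else _] =>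
      let H := fresh "H" in
      first [ have H : b = true by zs; lia
            | have H : b = false by zs; lia ];
      rewrite H /=; clear H
  end.

Lemma ins_rel Z c d : 1 <= d -> reduced Z ->
  ins (ins (ins (ins Z (c, true)) (c + d + 1, false)) (c, false)) (c + d, true) = Z.
Proof.
move=> Hd; elim: Z => [|[a e] Z IH] /=.
  by repeat zif.
case/andP => Hr Hal.
have Hinv : ins (ins Z (c, true)) (c, false) = Z by exact: (ins_inv (c, true) Hr).
have [HA|[HB|HC]] : (a = c /\ e = false) \/ (a <= c /\ ~ (a = c /\ e = false)) \/ c < a.
  by case: (e); lia.
- case: HA => ? ?; subst a e.
  repeat zif.
  case: Z Hr Hal {IH Hinv} => [|[h f] Z] /=; first by move=> _ _; repeat zif.
  by move=> _; case: f; zs => Hal; repeat zif.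
- by move: HB; case: (e) => HB; repeat zif.
have [C1|[C2|C3]] : c + d + 1 < a \/ (a = c + d /\ e = true) \/
                    (a <= c + d + 1 /\ ~ (a = c + d /\ e = true)).
  by case: (e); lia.
- move: C1 HC; case: (e) => C1 HC; repeat zif; rewrite IH //; congr ((_, _) :: _); lia.
- case: C2 => ? ?; subst a e.
  repeat zif.
  rewrite Hinv.
  case: Z Hr Hal {IH Hinv} => [|[h f] Z] /=; first by move=> _ _; repeat zif.
  by move=> _; case: f; zs => Hal; repeat zif.
- move: C3 HC; case: (e) => C3 HC; repeat zif; rewrite Hinv //; repeat zif;
    congr ((_, _) :: _); lia.
Qed.

Definition st := (seq zl * int)%type.
Definition act (s : st) (a : letter) : st :=
  match a with
  | xl => (s.1, s.2 + 1)
  | xi => (s.1, s.2 - 1)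
  | yl => (ins s.1 (1 - s.2, true), s.2)
  | yi => (ins s.1 (1 - s.2, false), s.2)
  end.
Definition actw (s : st) (w : word) : st := foldl act s w.

Lemma act_good s a : reduced s.1 -> reduced (act s a).1.
Proof. by case: a => //= H; apply: ins_reduced. Qed.

Lemma actw_good s w : reduced s.1 -> reduced (actw s w).1.
Proof. by elim: w s => //= a w IH s H; apply: IH; apply: act_good. Qed.

Lemma actw_cat s u v : actw s (u ++ v) = actw (actw s u) v.
Proof. exact: foldl_cat. Qed.

Lemma act_inv s a : reduced s.1 -> act (act s a) (linv a) = s.
Proof.
case: s => Z t /= H; case: a => /=.
- by congr pair; lia.
- by congr pair; lia.
- by rewrite (ins_inv (1 - t, true) H).
- by rewrite (ins_inv (1 - t, false) H).
Qed.

Lemma ins_rel' Z c d c1 c2 c3 c4 : c1 = c -> c2 = c + d + 1 -> c3 = c -> c4 = c + d ->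
  1 <= d -> reduced Z ->
  ins (ins (ins (ins Z (c1, true)) (c2, false)) (c3, false)) (c4, true) = Z.
Proof. by move=> -> -> -> ->; apply: ins_rel. Qed.

Lemma actw_rel1 s : reduced s.1 -> actw s relator1 = s.
Proof.
case: s => Z t /= H.
rewrite /actw /relator1 /wcomm /winv /=.
rewrite (@ins_rel' Z (1 - t) 1) //; try lia.
by congr pair; lia.
Qed.

Lemma actw_rel2 s : reduced s.1 -> actw s relator2 = s.
Proof.
case: s => Z t /= H.
rewrite /actw /relator2 /wcomm /winv /=.
rewrite (@ins_rel' Z (1 - t) 2) //; try lia.
by congr pair; lia.
Qed.

Lemma actw_weq u v : weq u v -> forall s, reduced s.1 -> actw s u = actw s v.
Proof.
elim=> {u v}.
- by [].
- by move=> u v _ IH s Hs; rewrite IH.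
- by move=> u v w _ IH1 _ IH2 s Hs; rewrite IH1 // IH2.
- move=> u a v s Hs.
  rewrite actw_cat [in RHS]actw_cat /= act_inv //; exact: actw_good.
- move=> u v s Hs.
  rewrite actw_cat (actw_cat _ relator1) actw_rel1 ?actw_cat //; exact: actw_good.
- move=> u v s Hs.
  rewrite actw_cat (actw_cat _ relator2) actw_rel2 ?actw_cat //; exact: actw_good.
Qed.

Fixpoint dec (Z : seq zl) (t : int) : word :=
  match Z with
  | [::] => xpow t
  | (k, e) :: Z' => dec Z' (1 - k) ++ ylet e :: xpow (t - 1 + k)
  end.

Lemma decx Z t u : weq (dec Z t ++ xpow u) (dec Z (t + u)).
Proof.
case: Z => [|[k e] Z] /=; first exact: xpow_add.
rewrite -catA /= xpow_add.
by have -> : t - 1 + k + u = t + u - 1 + k by lia.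
Qed.

Lemma linv_ylet e : linv (ylet e) = ylet (~~ e). Proof. by case: e. Qed.

Lemma decG Z t b d : reduced Z ->
  weq (dec Z t ++ xpow (1 - b - t) ++ ylet d :: xpow (t - 1 + b)) (dec (ins Z (b, d)) t).
Proof.
elim: Z t => [|[k e] Z IH] t /=.
  move=> _; rewrite catA xpow_add.
  by have -> : t + (1 - b - t) = 1 - b by lia.
case/andP => Hr Hal.
case: ifP => Hc.
  have [Ek Ee] : k = b /\ e = ~~ d.
    move: Hc; rewrite /cancelb /= => /andP [/eqP -> H]; split => //.
    by move: H; case: (d); case: (e).
  subst k e.
  rewrite -catA /= (catA (xpow (t - 1 + b))) xpow_add.
  have -> : t - 1 + b + (1 - b - t) = 0 by lia.
  rewrite xpow0 /=.
  have F := weq_free (dec Z (1 - b)) (ylet (~~ d)) (xpow (t - 1 + b)).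
  rewrite linv_ylet negbK in F.
  rewrite F decx.
  by have -> : 1 - b + (t - 1 + b) = t by lia.
case: ifP => Hx /=.
  rewrite -IH //.
  have Hm : if d then 1 <= k - b else 2 <= k - b.
    by move: Hx; rewrite /crossb /=; case: (d) => /=; lia.
  have R := @relX e d (k - b) Hm.
  set s := sgnb d in R *.
  transitivity (dec Z (1 - k) ++ (ylet e :: xpow (k - b) ++ [:: ylet d]) ++ xpow (t - 1 + b)).
    rewrite -!catA /= -!catA (catA (xpow (t - 1 + k))) xpow_add.
    by have -> : t - 1 + k + (1 - b - t) = k - b by lia.
  rewrite R.
  transitivity (dec Z (1 - (k + s)) ++ xpow s ++ xpow (k - b) ++ ylet d :: xpow (- (k - b) - s) ++ ylet e :: xpow (k - b + s) ++ xpow (t - 1 + b)).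
    rewrite (catA (dec Z _) (xpow s)) decx.
    have -> : 1 - (k + s) + s = 1 - k by lia.
    by rewrite -!catA /= -?catA /= -?catA /= -?catA.
  rewrite (catA (xpow s)) xpow_add -!catA /= xpow_add.
  have -> : s + (k - b) = 1 - b - (1 - (k + s)) by lia.
  have -> : - (k - b) - s = 1 - (k + s) - 1 + b by lia.
  by have -> : k - b + s + (t - 1 + b) = t - 1 + (k + s) by lia.
rewrite -!catA /= (catA (xpow (t - 1 + k))) xpow_add.
by have -> : t - 1 + k + (1 - b - t) = 1 - b - 1 + k by lia.
Qed.

Lemma inN_prefix (u v : word) : inN (u ++ v) -> inN u.
Proof.
case=> [H1 [H2 H3]]; split; [|split].
- by move=> p a q E; apply: (H1 p a (q ++ v)); rewrite E -catA.
- by move=> p e i q Hi E; apply: (H2 p e i (q ++ v) Hi); rewrite E -catA /= -catA.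
- by move=> p e i q Hi E; apply: (H3 p e i (q ++ v) Hi); rewrite E -catA /= -catA.
Qed.

Lemma rcons_split (w : word) (a : letter) (u P v : word) : rcons w a = u ++ P ++ v -> P <> [::] ->
  (exists P', P = rcons P' a /\ w = u ++ P') \/ (exists v', w = u ++ P ++ v').
Proof.
case/lastP: v => [|v c].
  rewrite cats0 => E HP; left.
  case/lastP: P E HP => [|P c] // E _.
  move: E; rewrite -rcons_cat => /eqP; rewrite eqseq_rcons => /andP [/eqP -> /eqP ->].
  by exists P.
rewrite -!rcons_cat => /eqP; rewrite eqseq_rcons => /andP [/eqP -> _] _.
by right; exists v.
Qed.

Lemma appN (w : word) (a : letter) : inN w ->
  (forall u, w <> rcons u (linv a)) ->
  (a = yl -> forall u e i, (1 <= i)%N -> w <> u ++ ylet e :: nseq i xl) ->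
  (a = yi -> forall u e i, (1 <= i)%N -> w <> u ++ ylet e :: nseq i.+1 xl) ->
  inN (rcons w a).
Proof.
case=> [H1 [H2 H3]] C1 C2 C3; split; [|split].
- move=> u b v E.
  have E' : rcons w a = u ++ [:: b; linv b] ++ v by rewrite E.
  case: (rcons_split E' (fun h => ltac:(discriminate h))) => [[P' [EP Ew]]|[v' Ew]].
    move: EP; rewrite (_ : [:: b; linv b] = rcons [:: b] (linv b)) // => /rcons_inj [EP Ea].
    by apply: (C1 u); rewrite Ew -EP -Ea linvK cats1.
  by apply: (H1 u b v').
- move=> u e i v Hi E.
  have E' : rcons w a = u ++ (ylet e :: nseq i xl ++ [:: yl]) ++ v by rewrite E -?catA /= -?catA /= -?catA.
  case: (rcons_split E' (fun h => ltac:(discriminate h))) => [[P' [EP Ew]]|[v' Ew]].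
    move: EP; rewrite -cat_cons cats1 => /eqP; rewrite eqseq_rcons => /andP [/eqP EP /eqP Ea].
    by apply: (C2 (esym Ea) u e i Hi); rewrite Ew -EP.
  by apply: (H2 u e i v' Hi); rewrite Ew -?catA /= -?catA /= -?catA.
- move=> u e i v Hi E.
  have E' : rcons w a = u ++ (ylet e :: nseq i.+1 xl ++ [:: yi]) ++ v by rewrite E -?catA /= -?catA /= -?catA.
  case: (rcons_split E' (fun h => ltac:(discriminate h))) => [[P' [EP Ew]]|[v' Ew]].
    move: EP; rewrite -cat_cons cats1 => /eqP; rewrite eqseq_rcons => /andP [/eqP EP /eqP Ea].
    by apply: (C3 (esym Ea) u e i Hi); rewrite Ew -EP.
  by apply: (H3 u e i v' Hi); rewrite Ew -?catA /= -?catA /= -?catA.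
Qed.

Lemma rcons_eq_S1 (Q : word) e' m (u : word) c :
  Q ++ ylet e' :: xpow m = rcons u c ->
  (m = 0 /\ c = ylet e') \/ (0 < m /\ c = xl) \/ (m < 0 /\ c = xi).
Proof.
case: m => [[|n]|n].
- by rewrite xpow0 cats1 => /rcons_inj [_ <-]; left.
- rewrite xpow_pos nseqS_rcons -rcons_cons -rcons_cat => /rcons_inj [_ <-].
  by right; left.
- rewrite xpow_negS nseqS_rcons -rcons_cons -rcons_cat => /rcons_inj [_ <-].
  by right; right.
Qed.

Lemma rcons_eq_S0 m (u : word) c : xpow m = rcons u c ->
  (0 < m /\ c = xl) \/ (m < 0 /\ c = xi).
Proof.
case: m => [[|n]|n].
- by rewrite xpow0; case: u.
- by rewrite xpow_pos nseqS_rcons => /rcons_inj [_ <-]; left.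
- by rewrite xpow_negS nseqS_rcons => /rcons_inj [_ <-]; right.
Qed.

Lemma S0_no_y m (u : word) e s : xpow m <> u ++ ylet e :: s.
Proof.
move=> E.
have : ylet e \in xpow m by rewrite E mem_cat in_cons eqxx orbT.
by rewrite /xpow; case: ifP => _; rewrite mem_nseq; case: (e); rewrite andbF.
Qed.

Lemma nseq_y n i e e' (s s' : word) :
  nseq n xl ++ ylet e :: s = nseq i xl ++ ylet e' :: s' -> n = i.
Proof.
elim: n i => [|n IH] [|i] //= E.
- by move: E; case: (e).
- by move: E; case: (e').
- by case: E => /IH ->.
Qed.

Lemma rev_S1 (Q : word) e m : rev (Q ++ ylet e :: xpow m) = rev (xpow m) ++ ylet e :: rev Q.
Proof. by rewrite rev_cat rev_cons cat_rcons. Qed.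

Lemma y_nseq_suffix (Q : word) e m (u : word) e' i :
  Q ++ ylet e :: xpow m = u ++ ylet e' :: nseq i xl -> (1 <= i)%N -> m = i%:Z.
Proof.
move=> /(congr1 rev); rewrite rev_S1 rev_cat rev_cons cat_rcons rev_nseq.
case: m => n.
  by rewrite xpow_pos rev_nseq => /nseq_y ->.
by rewrite xpow_negS rev_nseq; case: i.
Qed.

Lemma appN_S1 (Q : word) e' m e : inN (Q ++ ylet e' :: xpow m) ->
  (if e then (m <= 0) && ~~ ((m == 0) && ~~ e') else (m <= 1) && ~~ ((m == 0) && e')) ->
  inN (rcons (Q ++ ylet e' :: xpow m) (ylet e)).
Proof.
move=> HN Hc; apply: appN => //.
- move=> u /rcons_eq_S1 [[Em Ec]|[[_ Ec]|[_ Ec]]]; last 2 first.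
  + by move: Ec Hc; case: (e).
  + by move: Ec Hc; case: (e).
  by move: Ec Hc; rewrite linv_ylet Em; case: (e); case: (e') => //=.
- move=> Ee u e2 i Hi /y_nseq_suffix /(_ Hi) Em.
  by move: Hc Ee; rewrite Em; case: (e) => // Hc _; lia.
- move=> Ee u e2 i Hi /y_nseq_suffix /(_ (ltn0Sn i)) Em.
  by move: Hc Ee; rewrite Em; case: (e) => // Hc _; lia.
Qed.

Lemma appN_S0 m e : inN (xpow m) -> inN (rcons (xpow m) (ylet e)).
Proof.
move=> HN; apply: appN => //.
- by move=> u /rcons_eq_S0 [[_ Ec]|[_ Ec]]; move: Ec; case: (e).
- by move=> _ u e2 i _; apply: S0_no_y.
- by move=> _ u e2 i _; apply: S0_no_y.
Qed.

Lemma inN_nseq n l : l = xl \/ l = xi -> inN (nseq n l).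
Proof.
move=> Hl; split; [|split].
- move=> u a v E.
  have H1 : a \in nseq n l by rewrite E mem_cat in_cons eqxx orbT.
  have H2 : linv a \in nseq n l by rewrite E mem_cat !in_cons eqxx !orbT.
  move: H1 H2; rewrite !mem_nseq => /andP [_ /eqP ->] /andP [_ /eqP].
  by case: Hl => ->.
- move=> u e i v _ E.
  have : ylet e \in nseq n l by rewrite E mem_cat in_cons eqxx orbT.
  by rewrite mem_nseq; case: Hl => ->; case: (e); rewrite andbF.
- move=> u e i v _ E.
  have : ylet e \in nseq n l by rewrite E mem_cat in_cons eqxx orbT.
  by rewrite mem_nseq; case: Hl => ->; case: (e); rewrite andbF.
Qed.

Lemma inN_xpow m : inN (xpow m).
Proof. by rewrite /xpow; case: ifP => _; apply: inN_nseq; [left|right]. Qed.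

Lemma inN_app_x (W : word) e n l : l = xl \/ l = xi ->
  inN (rcons W (ylet e)) -> inN (W ++ ylet e :: nseq n l).
Proof.
move=> Hl H; elim: n => [|n IH]; first by rewrite cats1.
rewrite nseqS_rcons -rcons_cons -rcons_cat.
apply: appN => //.
- case: n {IH} => [|n] u.
    by rewrite cats1 => /rcons_inj [_]; case: Hl => ->; case: (e).
  by rewrite nseqS_rcons -rcons_cons -rcons_cat => /rcons_inj [_]; case: Hl => ->.
- by move=> El; case: Hl; rewrite El.
- by move=> El; case: Hl; rewrite El.
Qed.

Lemma inN_S1 (W : word) e m : inN (rcons W (ylet e)) -> inN (W ++ ylet e :: xpow m).
Proof. by move=> H; rewrite /xpow; case: ifP => _; apply: inN_app_x => //; [left|right]. Qed.

Lemma dec_inN Z t : reduced Z -> inN (dec Z t).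
Proof.
elim: Z t => [|[k e] Z IH] t /=; first by move=> _; apply: inN_xpow.
case/andP => Hr Hal.
apply: inN_S1.
case: Z Hr Hal IH => [|[k' e'] Z] Hr Hal IH /=; first exact: appN_S0 (inN_xpow _).
have := IH (1 - k) Hr; rewrite /= => HN.
apply: appN_S1 => //.
by move: Hal; rewrite /allowed /cancelb /crossb /=; case: (e); case: (e') => /=; lia.
Qed.

Definition s0 : st := ([::], 0).
Definition nf (w : word) : word := dec (actw s0 w).1 (actw s0 w).2.

Lemma nf_inN w : inN (nf w).
Proof. by apply: dec_inN; apply: actw_good. Qed.

Lemma dec_act_weq Z t a : reduced Z ->
  weq (rcons (dec Z t) a) (dec (act (Z, t) a).1 (act (Z, t) a).2).
Proof.
move=> H; case: a => /=.
- by rewrite -cats1 (_ : [:: xl] = xpow 1) // decx.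
- by rewrite -cats1 (_ : [:: xi] = xpow (-1)) // decx.
- have := @decG Z t (1 - t) true H.
  have -> : 1 - (1 - t) - t = 0 by lia.
  have -> : t - 1 + (1 - t) = 0 by lia.
  by rewrite xpow0 /= cats1.
- have := @decG Z t (1 - t) false H.
  have -> : 1 - (1 - t) - t = 0 by lia.
  have -> : t - 1 + (1 - t) = 0 by lia.
  by rewrite xpow0 /= cats1.
Qed.

Lemma nf_weq w : weq w (nf w).
Proof.
elim/last_ind: w => [|w a IH]; first by [].
rewrite /nf /actw foldl_rcons -/(actw s0 w).
case E: (actw s0 w) => [Z t].
have HZ : reduced Z by have := actw_good w (erefl : reduced s0.1); rewrite E.
rewrite IH /nf E /=.
exact: dec_act_weq.
Qed.

Lemma dec_shift Z t : exists Q m, forall j, dec Z (t + j) = Q ++ xpow (m + j).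
Proof.
case: Z => [|[k e] Z] /=; first by exists [::], t.
exists (dec Z (1 - k) ++ [:: ylet e]), (t - 1 + k) => j.
rewrite -catA /=.
by have -> : t + j - 1 + k = t - 1 + k + j by lia.
Qed.

Lemma xpowS_N (Q : word) m : inN (rcons (Q ++ xpow m) xl) -> xpow (m + 1) = rcons (xpow m) xl.
Proof.
case: m => n [H1 _].
  have -> : n%:Z + 1 = n.+1%:Z by lia.
  by rewrite xpow_pos nseqS_rcons.
exfalso; apply: (H1 (Q ++ nseq n xi) xi [::]).
by rewrite xpow_negS nseqS_rcons -!cats1 -!catA.
Qed.

Lemma xpowP_N (Q : word) m : inN (rcons (Q ++ xpow m) xi) -> xpow (m - 1) = rcons (xpow m) xi.
Proof.
case: m => [[|n]|n] [H1 _] //.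
  exfalso; apply: (H1 (Q ++ nseq n xl) xl [::]).
  by rewrite xpow_pos nseqS_rcons -!cats1 -!catA.
have -> : Negz n - 1 = Negz n.+1 by lia.
by rewrite !xpow_negS nseqS_rcons.
Qed.

Lemma xpow_nonneg m : 0 <= m -> xpow m = nseq (absz m) xl.
Proof. by rewrite /xpow => ->. Qed.

Lemma dec_act_N Z t a : reduced Z -> inN (rcons (dec Z t) a) ->
  dec (act (Z, t) a).1 (act (Z, t) a).2 = rcons (dec Z t) a.
Proof.
move=> HZ; case: a => /=.
- have [Q [m HQ]] := dec_shift Z t.
  have E0 := HQ 0; rewrite !addr0 in E0.
  rewrite HQ E0 => /xpowS_N ->.
  by rewrite rcons_cat.
- have [Q [m HQ]] := dec_shift Z t.
  have E0 := HQ 0; rewrite !addr0 in E0.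
  rewrite HQ E0 => /xpowP_N ->.
  by rewrite rcons_cat.
- case: Z HZ => [|[k e] Z] HZ /=.
    move=> _; have -> : 1 - (1 - t) = t by lia.
    have -> : t - 1 + (1 - t) = 0 by lia.
    by rewrite xpow0 cats1.
  move=> [H1 [H2 H3]].
  case: ifP => Hc.
    exfalso.
    have [Ek Ee] : k = 1 - t /\ e = false.
      move: Hc; rewrite /cancelb /= => /andP [/eqP -> H]; split => //.
      by move: H; case: (e).
    subst k e.
    apply: (H1 (dec Z (1 - (1 - t))) yi [::]).
    have -> : t - 1 + (1 - t) = 0 by lia.
    by rewrite xpow0 -!cats1 -!catA.
  case: ifP => Hx.
    exfalso.
    have Hm : 0 <= t - 1 + k by move: Hx; rewrite /crossb /=; lia.
    apply: (H2 (dec Z (1 - k)) e (absz (t - 1 + k)) [::]).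
      by move: Hx; rewrite /crossb /=; lia.
    by rewrite xpow_nonneg // -!cats1 -!catA.
  rewrite /=.
  have -> : 1 - (1 - t) - 1 + k = t - 1 + k by lia.
  have -> : t - 1 + (1 - t) = 0 by lia.
  by rewrite xpow0 -!cats1 -!catA.
- case: Z HZ => [|[k e] Z] HZ /=.
    move=> _; have -> : 1 - (1 - t) = t by lia.
    have -> : t - 1 + (1 - t) = 0 by lia.
    by rewrite xpow0 cats1.
  move=> [H1 [H2 H3]].
  case: ifP => Hc.
    exfalso.
    have [Ek Ee] : k = 1 - t /\ e = true.
      move: Hc; rewrite /cancelb /= => /andP [/eqP -> H]; split => //.
      by move: H; case: (e).
    subst k e.
    apply: (H1 (dec Z (1 - (1 - t))) yl [::]).
    have -> : t - 1 + (1 - t) = 0 by lia.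
    by rewrite xpow0 -!cats1 -!catA.
  case: ifP => Hx.
    exfalso.
    have Hm : 0 <= t - 1 + k by move: Hx; rewrite /crossb /=; lia.
    apply: (H3 (dec Z (1 - k)) e (absz (t - 1 + k)).-1 [::]).
      by move: Hx; rewrite /crossb /=; lia.
    rewrite xpow_nonneg // -!cats1 -!catA.
    by have -> : (absz (t - 1 + k)).-1.+1 = absz (t - 1 + k) by move: Hx; rewrite /crossb /=; lia.
  rewrite /=.
  have -> : 1 - (1 - t) - 1 + k = t - 1 + k by lia.
  have -> : t - 1 + (1 - t) = 0 by lia.
  by rewrite xpow0 -!cats1 -!catA.
Qed.

Lemma nf_N w : inN w -> nf w = w.
Proof.
elim/last_ind: w => [|w a IH] H; first by [].
have Hw : inN w by apply: (@inN_prefix w [:: a]); rewrite cats1.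
rewrite /nf /actw foldl_rcons -/(actw s0 w).
case E: (actw s0 w) => [Z t].
have HZ : reduced Z by have := actw_good w (erefl : reduced s0.1); rewrite E.
have IH' := IH Hw; rewrite /nf E /= in IH'.
by rewrite dec_act_N // IH'.
Qed.

Lemma nf_unique u v : inN u -> inN v -> weq u v -> u = v.
Proof.
move=> Hu Hv H.
by rewrite -(nf_N Hu) -(nf_N Hv) /nf (actw_weq H).
Qed.

Lemma nfword_S n ex eps : exists P e, nfword n.+1 ex eps = P ++ ylet e :: xpow (ex 0%N).
Proof.
elim: n => [|n [P [e IH]]].
  by exists (xpow (ex 1%N)), (eps 1%N).
exists (xpow (ex n.+2) ++ ylet (eps n.+2) :: P), e.
change (nfword n.+2 ex eps) with (xpow (ex n.+2) ++ ylet (eps n.+2) :: nfword n.+1 ex eps).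
by rewrite IH -catA.
Qed.

Lemma onT_of g (γ : word) a : inN γ -> weq γ g ->
  (inN (rcons γ a) \/ exists P, γ = rcons P (linv a)) -> onT g a.
Proof.
move=> HN Hg [H|[P E]].
  exists (rcons γ a), γ, a, [::]; split => //; split; first by rewrite cats1.
  by left.
exists γ, P, (linv a), [::]; split => //; split; first by rewrite E cats1.
right; split => //.
apply: weq_sym.
rewrite -Hg E -!cats1 -catA /=.
by have := weq_free_end P (linv a); rewrite linvK.
Qed.

Lemma app_x (γ : word) a : (a = xl \/ a = xi) -> inN γ ->
  inN (rcons γ a) \/ exists P, γ = rcons P (linv a).
Proof.
move=> Ha; case/lastP: γ => [|P c] H.
  left; apply: appN => //.
  - by case.
  - by move=> Ea; case: Ha; rewrite Ea.
  - by move=> Ea; case: Ha; rewrite Ea.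
case Ec: (c == linv a); first by right; exists P; rewrite (eqP Ec).
left; apply: appN => //.
- by move=> u /rcons_inj [_ Ec']; rewrite Ec' eqxx in Ec.
- by move=> Ea; case: Ha; rewrite Ea.
- by move=> Ea; case: Ha; rewrite Ea.
Qed.



Theorem lemma2p3 :
  (forall (n : nat) (ex : nat -> int) (eps : nat -> bool) (a : letter),
     inN (nfword n ex eps) ->
     (~ onT (nfword n ex eps) a <->
        (a = yl /\ (1 <= n)%N /\ (1 <= ex 0%N)%R) \/
        (a = yi /\ (1 <= n)%N /\ (2 <= ex 0%N)%R))) /\
  (forall (g : word) (a : letter), (a = xl \/ a = xi) -> onT g a).
Proof.
split; last first.
  move=> g a Ha.
  apply: (@onT_of g (nf g)); first exact: nf_inN.
    exact: weq_sym (nf_weq g).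
  by apply: app_x => //; apply: nf_inN.
move=> n ex eps a HN; split.
- move=> HnT.
  apply: NNPP => Hc; apply: HnT.
  apply: (onT_of HN (weq_refl _)).
  case: a Hc => Hc.
  + by apply: app_x => //; left.
  + by apply: app_x => //; right.
  + case: n HN Hc => [|n] HN Hc.
      by left; exact: (@appN_S0 (ex 0%N) true (inN_xpow _)).
    have [P [e E]] := nfword_S n ex eps.
    rewrite E in HN *.
    case Hm : ((ex 0%N == 0) && ~~ e).
      move/andP: Hm => [/eqP -> He]; right; exists P.
      by rewrite xpow0 cats1; move: He; case: (e).
    left; apply: (@appN_S1 P e (ex 0%N) true) => //=.
    rewrite Hm andbT.
    by case: (lerP (ex 0%N) 0) => // Hlt; exfalso; apply: Hc; left; split => //; split => //; lia.
  + case: n HN Hc => [|n] HN Hc.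
      by left; exact: (@appN_S0 (ex 0%N) false (inN_xpow _)).
    have [P [e E]] := nfword_S n ex eps.
    rewrite E in HN *.
    case Hm : ((ex 0%N == 0) && e).
      move/andP: Hm => [/eqP -> He]; right; exists P.
      by rewrite xpow0 cats1; move: He; case: (e).
    left; apply: (@appN_S1 P e (ex 0%N) false) => //=.
    rewrite Hm andbT.
    by case: (lerP (ex 0%N) 1) => // Hlt; exfalso; apply: Hc; right; split => //; split => //; lia.
- move=> Hc [w [u [b [v [Hw [Ew Hor]]]]]].
  have Hn : (1 <= n)%N by case: Hc => [[_ [H _]]|[_ [H _]]].
  case: n Hn HN Hc Hor => [|n] // _ HN Hc Hor.
  have [P [e E]] := nfword_S n ex eps.
  rewrite E in HN Hor.
  have Hm : 1 <= ex 0%N by case: Hc => [[_ [_ H]]|[_ [_ H]]] //; lia.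
  have Hu : inN u by apply: (inN_prefix (v := b :: v)); rewrite -Ew.
  case: Hor => [[Hug Eb]|[Hug Eb]].
    have Eu := nf_unique Hu HN Hug.
    subst u b.
    case: Hw => _ [H2 H3].
    case: Hc => [[Ea _]|[Ea [_ Hm2]]]; subst a.
      apply: (H2 P e (absz (ex 0%N)) v); first by lia.
      by rewrite Ew xpow_nonneg ?(le_trans _ Hm) // -catA.
    apply: (H3 P e (absz (ex 0%N)).-1 v); first by lia.
    rewrite Ew xpow_nonneg ?(le_trans _ Hm) // -catA.
    by have -> : (absz (ex 0%N)).-1.+1 = absz (ex 0%N) by lia.
  have Hu' : inN (rcons u b).
    by apply: (inN_prefix (v := v)); rewrite cat_rcons -Ew.
  have Hw' : weq (rcons u b) (P ++ ylet e :: xpow (ex 0%N)).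
    rewrite Hug Eb -!cats1 -catA /=.
    exact: weq_free_end.
  have Eu := nf_unique Hu' HN Hw'.
  case: (rcons_eq_S1 (esym Eu)) => [[Em _]|[[_ Eb']|[Hneg _]]].
  + by move: Hm; rewrite Em.
  + by move: Eb'; rewrite Eb; case: Hc => [[-> _]|[-> _]].
  + by move: Hm Hneg; lia.
Qed.
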